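(* Let $X$ and $Y$ be bounded degree simplicial complexes and suppose there is some $k$ such that $\mathrm{con}^k_{X\to Y}(r)<+\infty$ for every $r$. Then for each $q\geq 1$ and every $r$, \[ {}_s\mathrm{TO}^q_X(r)\leq k\,{}_s\mathrm{TO}^q_Y\big(\mathrm{con}^k_{X\to Y}(r)\big). \]
   Context: Simplicial complexes are topological realisations of abstract simplicial complexes with countably many $0$-simplices and bounded degree; for a subcomplex $Z$, $|Z|$ denotes its number of $0$-simplices, and $\mathcal{C}Z$ denotes its set of closed simplices. For a finite complex $Z$ and continuous $f:Z\to\mathbb{R}^q$, ${}_s\mathrm{Ov}(f)=\max_{z\in\mathbb{R}^q}|\{\sigma\in\mathcal{C}Z : z\in f(\sigma)\}|$, ${}_s\mathrm{TO}^q(Z)=\min_f {}_s\mathrm{Ov}(f)$ over continuous $f:Z\to\mathbb{R}^q$, and ${}_s\mathrm{TO}^q_X(r)=\max\{{}_s\mathrm{TO}^q(Z): Z \text{ a subcomplex of } X,\ |Z|\leq r\}$. A continuous map $f:Z\to Y$ from a finite complex $Z$ is a $k$-coarse construction if $f$ maps the $\ell$-skeleton of $Z$ into the $\ell$-skeleton of $Y$ for every $\ell$, and every closed simplex of $Y$ meets the images of at most $k$ closed simplices of $Z$. Its volume is the minimal number of $0$-simplices in a subcomplex of $Y$ containing its image. $\mathrm{con}^k_{X\to Y}(r)$ is the maximum, over subcomplexes $Z$ of $X$ with $|Z|\leq r$, of the minimal volume of a $k$-coarse construction $Z\to Y$ (or $+\infty$ if none exists). *)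

(* Defs.v *)
From HB Require Import structures.
From mathcomp Require Import all_boot all_order all_algebra.
From mathcomp Require Import finmap.
From mathcomp Require Import boolp reals.
From mathcomp Require classical_sets.
Set Implicit Arguments. Unset Strict Implicit. Unset Printing Implicit Defensive.
Import Order.TTheory GRing.Theory Num.Theory.
Local Open Scope fset_scope.
Local Open Scope ring_scope.

(** Generic (classical) maximum / minimum of a set of naturals.
    nat_max P is the largest element of P when P has one (i.e. P is
    nonempty and bounded); nat_min P is the least element of P when P is
    nonempty.  (Default value 0 otherwise; all uses below are on sets where
    the extremum exists.) *)
Definition nat_max (P : nat -> Prop) : nat :=
  classical_sets.xget 0%N (fun n => P n /\ forall m, P m -> (m <= n)%N).
Definition nat_min (P : nat -> Prop) : nat :=
  classical_sets.xget 0%N (fun n => P n /\ forall m, P m -> (n <= m)%N).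

Definition is_complex (X : {fset nat} -> Prop) : Prop :=
  (forall s, X s -> s != fset0) /\
  (forall s t, X s -> fsubset t s -> t != fset0 -> X t).

Definition bounded_degree (X : {fset nat} -> Prop) : Prop :=
  exists D : nat, forall (v : nat) (l : seq {fset nat}),
    uniq l -> (forall s, s \in l -> X s /\ v \in s) -> (size l <= D)%N.

Definition bd_complex (X : {fset nat} -> Prop) : Prop :=
  is_complex X /\ bounded_degree X.

Definition subcomplex (Z : {fset {fset nat}}) (X : {fset nat} -> Prop) : Prop :=
  is_complex (fun s => s \in Z) /\ (forall s, s \in Z -> X s).

Definition is_vertex (s : {fset nat}) : bool := (#|` s| == 1)%N.
Definition nverts (Z : {fset {fset nat}}) : nat :=
  #|` [fset s in Z | is_vertex s]|.

Section Realisation.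
Variable R : realType.

(** Points of the topological realisation are barycentric-coordinate functions
    x : nat -> R.  x lies in the closed simplex s iff its coordinates are
    nonnegative, vanish off s, and sum to 1. *)
Definition in_simplex (s : {fset nat}) (x : nat -> R) : Prop :=
  (forall i, 0 <= x i) /\ (forall i, i \notin s -> x i = 0) /\
  \sum_(i <- s) x i = 1.

Definition realis (X : {fset nat} -> Prop) (x : nat -> R) : Prop :=
  exists s, X s /\ in_simplex s x.

(** Continuity on a subset A of the realisation, for the sup metric on
    barycentric coordinates (this is the usual topology for locally finite,
    in particular bounded degree, complexes); the target is J -> R with the
    sup metric (J = nat for complexes, J = 'I_q for R^q). *)
Definition cont_on {J : Type} (A : (nat -> R) -> Prop) (f : (nat -> R) -> J -> R)
  : Prop :=
  forall x, A x -> forall eps : R, 0 < eps -> exists2 delta : R, 0 < delta &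
    forall y, A y -> (forall i, `|x i - y i| < delta) ->
      forall j, `|f x j - f y j| < eps.

Definition nb_cover (q : nat) (Z : {fset {fset nat}}) (f : (nat -> R) -> 'I_q -> R)
  (z : 'I_q -> R) : nat :=
  #|` [fset s in Z | `[< exists x, in_simplex s x /\ f x = z >] ]|.

Definition sOv (q : nat) (Z : {fset {fset nat}}) (f : (nat -> R) -> 'I_q -> R) : nat :=
  nat_max (fun n => exists z, n = nb_cover Z f z).

Definition sTO (q : nat) (Z : {fset {fset nat}}) : nat :=
  nat_min (fun n => exists f : (nat -> R) -> 'I_q -> R,
    cont_on (realis (fun s => s \in Z)) f /\ n = sOv Z f).

Definition sTOX (q : nat) (X : {fset nat} -> Prop) (r : nat) : nat :=
  nat_max (fun n => exists Z, subcomplex Z X /\ (nverts Z <= r)%N /\ n = sTO q Z).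

Definition coarse_construction (k : nat) (Z : {fset {fset nat}})
  (Y : {fset nat} -> Prop) (f : (nat -> R) -> nat -> R) : Prop :=
  (forall x, realis (fun s => s \in Z) x -> realis Y (f x)) /\
  cont_on (realis (fun s => s \in Z)) f /\
  (forall (l : nat) x,
     (exists s, s \in Z /\ (#|` s| <= l.+1)%N /\ in_simplex s x) ->
     exists t, Y t /\ (#|` t| <= l.+1)%N /\ in_simplex t (f x)) /\
  (forall t, Y t ->
     (#|` [fset s in Z | `[< exists x, in_simplex s x /\ in_simplex t (f x) >] ]|
       <= k)%N).

Definition volume (Z : {fset {fset nat}}) (Y : {fset nat} -> Prop)
  (f : (nat -> R) -> nat -> R) : nat :=
  nat_min (fun n => exists W, subcomplex W Y /\
    (forall x, realis (fun s => s \in Z) x -> realis (fun s => s \in W) (f x)) /\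
    n = nverts W).

Definition min_con_vol (k : nat) (Z : {fset {fset nat}}) (Y : {fset nat} -> Prop) : nat :=
  nat_min (fun n => exists f, coarse_construction k Z Y f /\ n = volume Z Y f).

(** con^k_{X -> Y}(r), with None standing for +infinity: it is finite iff every
    subcomplex Z of X with |Z| <= r admits a k-coarse construction into Y and
    the minimal volumes of these are bounded; then it is their maximum. *)
Definition con_set (k : nat) (X Y : {fset nat} -> Prop) (r : nat) (n : nat) : Prop :=
  exists Z, subcomplex Z X /\ (nverts Z <= r)%N /\ n = min_con_vol k Z Y.

Definition con (k : nat) (X Y : {fset nat} -> Prop) (r : nat) : option nat :=
  if `[< (forall Z, subcomplex Z X -> (nverts Z <= r)%N ->
            exists f, coarse_construction k Z Y f) /\
         (exists B, forall n, con_set k X Y r n -> (n <= B)%N) >]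
  then Some (nat_max (con_set k X Y r)) else None.

End Realisation.

(* Main.v *)
Require Import Defs.
From HB Require Import structures.
From mathcomp Require Import all_boot all_order all_algebra.
From mathcomp Require Import finmap.
From mathcomp Require Import boolp reals classical_sets topology normedtype.
Import Order.TTheory GRing.Theory Num.Theory.
Import numFieldNormedType.Exports.
Set Implicit Arguments. Unset Strict Implicit.
Local Open Scope fset_scope.

Lemma nat_minP (P : nat -> Prop) : (exists n, P n) ->
  P (nat_min P) /\ forall m, P m -> (nat_min P <= m)%N.
Proof.
move=> [n Pn]; rewrite /nat_min.
suff [m Hm] : exists m, P m /\ (forall k, P k -> (m <= k)%N).
  exact: (@xgetPex nat 0%N (fun m => P m /\ (forall k, P k -> (m <= k)%N)) (ex_intro _ m Hm)).
have ex : exists n, `[< P n >] by exists n; apply/asboolP.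
case: (ex_minnP ex) => m /asboolP Pm Hm; exists m; split => // k Pk.
by apply: Hm; apply/asboolP.
Qed.

Lemma nat_maxP (P : nat -> Prop) : (exists n, P n) ->
  (exists B, forall n, P n -> (n <= B)%N) ->
  P (nat_max P) /\ forall m, P m -> (m <= nat_max P)%N.
Proof.
move=> [n Pn] [B HB]; rewrite /nat_max.
suff [m Hm] : exists m, P m /\ (forall k, P k -> (k <= m)%N).
  exact: (@xgetPex nat 0%N (fun m => P m /\ (forall k, P k -> (k <= m)%N)) (ex_intro _ m Hm)).
have ex : exists n, `[< P n >] by exists n; apply/asboolP.
have bd : forall n, `[< P n >] -> (n <= B)%N by move=> k /asboolP; apply: HB.
case: (ex_maxnP ex bd) => m /asboolP Pm Hm; exists m; split => // k Pk.
by apply: Hm; apply/asboolP.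
Qed.

Lemma nat_max_cases (P : nat -> Prop) : nat_max P = 0%N \/ P (nat_max P).
Proof.
rewrite /nat_max.
have [[n Hn]|N] := pselect (exists n, P n /\ forall m, P m -> (m <= n)%N).
  by right; have [] := @xgetPex nat 0%N (fun n => P n /\ _) (ex_intro _ n Hn).
by left; apply: xgetPN => n Hn; apply: N; exists n.
Qed.

Lemma nat_min_cases (P : nat -> Prop) : nat_min P = 0%N \/ P (nat_min P).
Proof.
rewrite /nat_min.
have [[n Hn]|N] := pselect (exists n, P n /\ forall m, P m -> (n <= m)%N).
  by right; have [] := @xgetPex nat 0%N (fun n => P n /\ _) (ex_intro _ n Hn).
by left; apply: xgetPN => n Hn; apply: N; exists n.
Qed.

Lemma card_cover (T U : choiceType) (l : seq T) (F : T -> {fset U}) (B : {fset U}) c :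
  (forall x, x \in B -> exists2 a, a \in l & x \in F a) ->
  (forall a, a \in l -> (#|` F a| <= c)%N) -> (#|` B| <= size l * c)%N.
Proof.
move=> HB HF.
have sub : B `<=` foldr (fun a acc => F a `|` acc) fset0 l.
  apply/fsubsetP => x /HB [a al xF]; elim: l al {HB HF} => // b l IH.
  rewrite inE => /orP [/eqP <-|al] /=; apply/fsetUP; [by left|right; exact: IH].
apply: leq_trans (fsubset_leq_card sub) _.
elim: l HF {HB sub} => [|a l IH] HF /=; first by rewrite mul0n leqn0; apply/eqP; apply: cardfs0.
rewrite mulSn; apply: leq_trans (leq_card_fsetU _ _) _.
apply: leq_add; first by apply: HF; rewrite inE eqxx.
by apply: IH => b bl; apply: HF; rewrite inE bl orbT.
Qed.

Lemma simplex_size (Y : {fset nat} -> Prop) (D : nat) (t : {fset nat}) :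
  is_complex Y ->
  (forall (v : nat) (l : seq {fset nat}),
    uniq l -> (forall s, s \in l -> Y s /\ v \in s) -> (size l <= D)%N) ->
  Y t -> (#|` t| <= D)%N.
Proof.
move=> [Yne Ycl] HD Yt.
have /fset0Pn [v vt] := Yne _ Yt.
have -> : #|` t| = size (map (fun w => [fset v; w]) t) by rewrite size_map.
apply: (HD v).
  rewrite map_inj_in_uniq // => w w' _ _ E.
  have h1 : w \in [fset v; w'] by rewrite -E !inE eqxx orbT.
  have h2 : w' \in [fset v; w] by rewrite E !inE eqxx orbT.
  move: h1 h2; rewrite !inE => /orP [/eqP ->|/eqP //] /orP [/eqP -> //|/eqP //].
move=> s /mapP [w wt ->]; split; last by rewrite !inE eqxx.
apply: (Ycl t) => //; last by apply/fset0Pn; exists v; rewrite !inE eqxx.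
by apply/fsubsetP => x; rewrite !inE => /orP [] /eqP ->.
Qed.

Lemma star_vertex (Y : {fset nat} -> Prop) : bounded_degree Y ->
  forall v, exists S : {fset nat}, forall t, Y t -> v \in t -> t `<=` S.
Proof.
move=> [D HD] v.
pose P n := `[< exists l : seq {fset nat}, uniq l /\ size l = n /\
   forall s, s \in l -> Y s /\ v \in s >].
have ex : exists n, P n by exists 0%N; apply/asboolP; exists [::].
have bd : forall n, P n -> (n <= D)%N.
  by move=> n /asboolP [l [ul [<- Hl]]]; apply: HD ul Hl.
case: (ex_maxnP ex bd) => n /asboolP [l [ul [sl Hl]]] Hmax.
exists (foldr (fun a acc => a `|` acc) fset0 l) => t Yt vt.
have tl : t \in l.
  apply/negPn/negP => tnl.
  have : P n.+1.
    apply/asboolP; exists (t :: l); split; first by rewrite /= tnl.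
    split; first by rewrite /= sl.
    by move=> s; rewrite inE => /orP [/eqP ->|/Hl].
  by move/Hmax; rewrite ltnn.
elim: l tl {ul sl Hl Hmax} => // a l IH; rewrite inE => /orP [/eqP <-|tl] /=.
  exact: fsubsetUl.
exact: fsubset_trans (IH tl) (fsubsetUr _ _).
Qed.

Lemma star_set (Y : {fset nat} -> Prop) : bounded_degree Y ->
  forall A : seq nat, exists S : {fset nat},
    forall t, Y t -> (exists2 v, v \in A & v \in t) -> t `<=` S.
Proof.
move=> bY; elim => [|a A [S HS]]; first by exists fset0 => t _ [v].
have [Sa HSa] := @star_vertex Y bY a.
exists (Sa `|` S) => t Yt [v]; rewrite inE => /orP [/eqP ->|vA] vt.
  exact: fsubset_trans (HSa t Yt vt) (fsubsetUl _ _).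
exact: fsubset_trans (HS t Yt (ex_intro2 _ _ v vA vt)) (fsubsetUr _ _).
Qed.

Lemma card_subcomplex (W : {fset {fset nat}}) (Y : {fset nat} -> Prop) (D : nat) :
  subcomplex W Y ->
  (forall (v : nat) (l : seq {fset nat}),
    uniq l -> (forall s, s \in l -> Y s /\ v \in s) -> (size l <= D)%N) ->
  (#|` W| <= nverts W * D)%N.
Proof.
move=> [[Wne Wcl] WY] HD; rewrite /nverts.
apply: (@card_cover _ _ _ (fun u => [fset s in W | u `<=` s])).
  move=> s sW; have /fset0Pn [v vs] := Wne _ sW.
  exists [fset v].
    rewrite !inE /= /is_vertex cardfs1 andbT.
    apply: (Wcl s) => //; last by apply/fset0Pn; exists v; rewrite !inE.
    by apply/fsubsetP => x /fset1P ->.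
  by rewrite !inE sW /=; apply/fsubsetP => x /fset1P ->.
move=> u; rewrite !inE /= /is_vertex => /andP [uW /cardfs1P [v ->]].
apply: (HD v); first exact: fset_uniq.
move=> s; rewrite !inE /= => /andP [sW /fsubsetP sub]; split; first exact: WY.
by apply: sub; rewrite !inE.
Qed.

Lemma sTO_le_card (R : realType) q (W : {fset {fset nat}}) :
  (sTO R q W <= #|` W|)%N.
Proof.
rewrite /sTO; set P := (X in nat_min X); case: (nat_min_cases P) => [->//|[g [_ ->]]].
rewrite /sOv; set P' := (X in nat_max X); case: (nat_max_cases P') => [->//|[z ->]].
rewrite /nb_cover; exact: fsubset_leq_card (fset_sub _ _).
Qed.

Local Open Scope ring_scope.
From mathcomp Require Import ring lra.

Lemma sum_le_const (R : realType) (l : seq nat) (F : nat -> R) c :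
  (forall i, i \in l -> F i <= c) -> \sum_(i <- l) F i <= c *+ size l.
Proof.
elim: l => [|a l IH] H; first by rewrite big_nil.
rewrite big_cons /= mulrS lerD //; first by apply: H; rewrite inE eqxx.
by apply: IH => i il; apply: H; rewrite inE il orbT.
Qed.

Lemma big_coord (R : realType) (t : {fset nat}) (y : nat -> R) (D : nat) :
  in_simplex t y -> (#|` t| <= D)%N ->
  (0 < D)%N /\ exists2 j, j \in t & (2 * D%:R)^-1 < y j.
Proof.
move=> [y0 [y1 y2]] tD.
have Dpos : (0 < D)%N.
  case: D tD => // /[!leqn0] /eqP /cardfs0_eq t0.
  by move: y2; rewrite t0 big_seq_fset0 => /eqP; rewrite eq_sym oner_eq0.
split => //.
case: (pselect (exists2 j, j \in t & (2 * D%:R)^-1 < y j)) => // N.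
have le : forall j, j \in t -> y j <= (2 * D%:R)^-1.
  move=> j jt; rewrite leNgt; apply/negP => lt; apply: N; by exists j.
have := @sum_le_const R t y _ le; rewrite y2.
have Dr : (0 : R) < D%:R by rewrite ltr0n.
have sD : (#|` t|%:R : R) <= D%:R by rewrite ler_nat.
rewrite -mulr_natr => H.
have : (2 * D%:R)^-1 * #|` t|%:R <= (2 * D%:R)^-1 * (D%:R : R).
  by apply: ler_wpM2l => //; rewrite invr_ge0; lra.
have e : (2 * D%:R)^-1 * (D%:R : R) = 2^-1.
  field; rewrite ?gt_eqF //; lra.
rewrite e => H2; lra.
Qed.

Lemma local_supp (R : realType) (Y : {fset nat} -> Prop) (A : (nat -> R) -> Prop)
  (f : (nat -> R) -> nat -> R) (x : nat -> R) :
  bd_complex Y -> cont_on A f -> (forall x, A x -> realis Y (f x)) -> A x ->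
  exists V : {fset nat}, exists2 d : R, 0 < d &
    forall y, A y -> (forall i, `|x i - y i| < d) -> forall j, f y j != 0 -> j \in V.
Proof.
move=> [cY bY] cf fY Ax.
have bY' := bY; case: bY' => D HD.
have [t0 [Yt0 st0]] := fY x Ax.
have [Dpos _] := big_coord st0 (simplex_size cY HD Yt0).
have [S HS] := star_set bY t0.
have epos : (0 : R) < (2 * D%:R)^-1.
  by rewrite invr_gt0 mulr_gt0 // ltr0n.
have [d dpos Hd] := cf x Ax _ epos.
exists S, d => // y Ay xy j fyj.
have [t [Yt st]] := fY y Ay.
have [_ [j0 j0t lt]] := big_coord st (simplex_size cY HD Yt).
have hj0 := Hd y Ay xy j0.
have j0t0 : j0 \in t0.
  apply/negPn/negP => nj; move: (st0.2.1 j0 nj) => fx0.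
  move: hj0; rewrite fx0 sub0r normrN ger0_norm; last by apply: st.1.
  by rewrite ltNge (ltW lt).
have jt : j \in t.
  apply/negPn/negP => nj; move: fyj; by rewrite (st.2.1 j nj) eqxx.
by apply: (fsubsetP (HS t Yt (ex_intro2 _ _ j0 j0t0 j0t))).
Qed.

Local Open Scope classical_set_scope.
Notation PT R := (@prod_topology nat (fun _ => (R : realType) : topologicalType)).
HB.instance Definition PT_pointed (R : realType) :=
  @isPointed.Build (@prod_topology nat (fun _ => R : topologicalType)) (fun _ => 0%R).

Lemma box_open (R : realType) (x : nat -> R) (S : seq nat) (d : R) :
  @open (PT R) [set y : PT R | forall i, i \in S -> `|x i - y i| < d].
Proof.
elim: S => [|a S IH].
  have -> : [set y : PT R | forall i, i \in [::] -> `|x i - y i| < d] = setT.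
    by apply/seteqP; split => // y _ i.
  exact: openT.
have -> : [set y : PT R | forall i, i \in a :: S -> `|x i - y i| < d] =
   (@mathcomp_extra.proj nat (fun _ => R : topologicalType) a) @^-1` (ball (x a) d) `&`
   [set y : PT R | forall i, i \in S -> `|x i - y i| < d].
  apply/seteqP; split => y /=.
    move=> H; split; first by rewrite -ball_normE /=; apply: H; rewrite inE eqxx.
    by move=> i iS; apply: H; rewrite inE iS orbT.
  move=> [H1 H2] i; rewrite inE => /orP [/eqP ->|]; last exact: H2.
  by move: H1; rewrite -ball_normE.
apply: openI => //.
apply: open_comp; last exact: ball_open.
move=> y _; exact: proj_continuous.
Qed.

Lemma box_compact (R : realType) (s : {fset nat}) :
  @compact (PT R) [set y : PT R | forall i,
     (fun i => if i \in s then `[0, 1] else [set 0]) i (y i)].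
Proof.
apply: (@tychonoff nat (fun _ => R : topologicalType)).
move=> i; case: ifP => _; [exact: segment_compact | exact: compact_set1].
Qed.

Lemma coord_le1 (R : realType) (s : {fset nat}) (y : nat -> R) i :
  in_simplex s y -> i \in s -> y i <= 1.
Proof.
move=> [y0 [_ y2]] iS; rewrite -y2 (big_rem i) //= lerDl.
by apply: sumr_ge0 => j _; apply: y0.
Qed.

Lemma simplex_supp (R : realType) (Y : {fset nat} -> Prop) (Z : {fset {fset nat}})
  (f : (nat -> R) -> nat -> R) (s : {fset nat}) :
  bd_complex Y -> cont_on (realis (fun s => s \in Z)) f ->
  (forall x, realis (fun s => s \in Z) x -> realis Y (f x)) -> s \in Z ->
  exists V : {fset nat}, forall y, in_simplex s y -> forall j, f y j != 0 -> j \in V.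
Proof.
move=> bdY cf fY sZ.
pose A := @realis R (fun s => s \in Z).
set K := [set y : PT R | forall i,
     (fun i => if i \in s then `[0, 1] else [set 0]) i (y i)].
have Kc : cover_compact K by have := @box_compact R s; rewrite compact_cover.
pose box (p : ((nat -> R) * R)%type) : set (PT R) :=
  [set y : PT R | forall i, i \in enum_fset s -> `|p.1 i - y i| < p.2].
pose Dset : set ((nat -> R) * R)%type := fun p => 0 < p.2 /\
  ((in_simplex s p.1 /\ exists V : {fset nat}, forall y, A y ->
      (forall i, `|p.1 i - y i| < p.2) -> forall j, f y j != 0 -> j \in V)
   \/ (forall y, in_simplex s y -> ~ box p y)).
have cov : K `<=` cover Dset box.
  move=> y Ky.
  case: (pselect (in_simplex s y)) => [sy|nsy].
    have Ay : A y by exists s.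
    have [V [d dpos Hd]] := local_supp bdY cf fY Ay.
    exists (y, d); last by move=> i _ /=; rewrite subrr normr0.
    by split => //; left; split => //; exists V.
  have y0 : forall i, 0 <= y i.
    move=> i; have := Ky i; case: ifP => _ /=; last by move=> ->.
    by rewrite in_itv /= => /andP [].
  have y1 : forall i, i \notin s -> y i = 0.
    by move=> i /negPf nis; have := Ky i; rewrite nis.
  have sne : \sum_(i <- s) y i != 1.
    by apply/negP => /eqP e; apply: nsy.
  set e := `|\sum_(i <- s) y i - 1|.
  have epos : 0 < e by rewrite normr_gt0 subr_eq0.
  set d := e / (#|` s|%:R + 1).
  have dpos : 0 < d by rewrite divr_gt0 // ltr_wpDl.
  exists (y, d); last by move=> i _ /=; rewrite subrr normr0.
  split => //; right => y' [_ [_ s1]] /= by'.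
  have : e <= d *+ #|` s|.
    rewrite /e -s1 -sumrB; apply: le_trans (ler_norm_sum _ _ _) _.
    by apply: sum_le_const => i iS; apply/ltW/by'.
  rewrite -mulr_natr /d.
  have -> : e / (#|` s|%:R + 1) * #|` s|%:R = e * (#|` s|%:R / (#|` s|%:R + 1)).
    by rewrite mulrAC mulrA.
  have : (#|` s|%:R : R) / (#|` s|%:R + 1) < 1.
    by rewrite ltr_pdivrMr ?mul1r ?ltrDl // ltr_wpDl.
  move=> lt1 le1.
  have : e * (#|` s|%:R / (#|` s|%:R + 1)) < e * 1 by rewrite ltr_pM2l.
  by rewrite mulr1 => lt2; move: (le_lt_trans le1 lt2); rewrite ltxx.
have [D' sD' covD'] := Kc _ Dset box (fun p _ => box_open p.1 (enum_fset s) p.2) cov.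
have [V HV] : exists V : {fset nat}, forall p, p \in enum_fset D' ->
    forall y, in_simplex s y -> box p y -> forall j, f y j != 0 -> j \in V.
  have : forall p, p \in enum_fset D' -> Dset p.
    by move=> p pD; have := sD' p pD; rewrite inE.
  elim: (enum_fset D') => [|p l IH] H; first by exists fset0.
  have [V HV] := IH (fun p' pl => H p' (ltac:(by rewrite inE pl orbT))).
  have [ppos [[sp [Vp HVp]]|dis]] := H p (mem_head _ _).
    exists (Vp `|` V)%fset => p'; rewrite inE => /orP [/eqP ->|p'l] y sy by' j fyj.
      apply/fsetUP; left; apply: (HVp y) => //; first by exists s.
      move=> i; case: (boolP (i \in s)) => iS; first exact: by'.
      by rewrite (sp.2.1 i iS) (sy.2.1 i iS) subrr normr0.
    by apply/fsetUP; right; exact: (HV p' p'l y sy by' j fyj).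
  exists V => p'; rewrite inE => /orP [/eqP ->|p'l] y sy by'.
    by case: (dis y sy by').
  exact: (HV p').
exists V => y sy j fyj.
have Ky : K y.
  move=> i /=; case: ifP => iS.
    by rewrite /= in_itv /=; apply/andP; split; [apply: sy.1|apply: coord_le1 sy iS].
  by apply: sy.2.1; rewrite iS.
have [p pD' byp] := covD' y Ky.
exact: (HV p pD' y sy byp).
Qed.

Lemma image_finite (R : realType) (Y : {fset nat} -> Prop) (Z : {fset {fset nat}})
  (f : (nat -> R) -> nat -> R) :
  bd_complex Y -> cont_on (realis (fun s => s \in Z)) f ->
  (forall x, realis (fun s => s \in Z) x -> realis Y (f x)) ->
  exists W, subcomplex W Y /\
    forall x, realis (fun s => s \in Z) x -> realis (fun s => s \in W) (f x).
Proof.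
move=> bdY cf fY.
have [V HV] : exists V : {fset nat}, forall s, s \in enum_fset Z ->
    forall y, in_simplex s y -> forall j, f y j != 0 -> j \in V.
  have : {subset enum_fset Z <= Z} by [].
  elim: (enum_fset Z) => [|s l IH] H; first by exists fset0.
  have [V HV] := IH (fun s' sl => H s' (ltac:(by rewrite inE sl orbT))).
  have [Vs HVs] := simplex_supp bdY cf fY (H s (mem_head _ _)).
  exists (Vs `|` V)%fset => s'; rewrite inE => /orP [/eqP ->|s'l] y sy j fyj.
    by apply/fsetUP; left; exact: (HVs y sy j fyj).
  by apply/fsetUP; right; exact: (HV s' s'l y sy j fyj).
have [[Yne Ycl] _] := bdY.
pose W := [fset u in fpowerset V | `[< Y u >]]%fset.
have inW u : (u \in W) = ((u `<=` V)%fset && `[< Y u >]).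
  by rewrite /W !inE fpowersetE.
exists W; split.
  split; last by move=> s; rewrite inW => /andP [_ /asboolP].
  split; first by move=> s; rewrite inW => /andP [_ /asboolP /Yne].
  move=> s t; rewrite !inW => /andP [sV /asboolP Ys] ts tne.
  rewrite (fsubset_trans ts sV) /=; apply/asboolP; exact: (Ycl s).
move=> x [s [sZ sx]].
have [t [Yt st]] := fY x (ex_intro _ s (conj sZ sx)).
pose u := [fset j in t | f x j != 0]%fset.
have ut : (u `<=` t)%fset by apply: fset_sub.
have inu j : (j \in u) = (j \in t) && (f x j != 0) by rewrite !inE.
have sum_eq : \sum_(i <- u) f x i = \sum_(i <- t) f x i.
  apply: big_fset_incl => // j jt; rewrite inu jt /= => /negPn /eqP //.
have [st0 [st1 st2]] := st.
exists u; split; last first.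
  split => //; split; last by rewrite sum_eq.
  move=> i; rewrite inu; case: (boolP (i \in t)) => it /=; last by move=> _; apply: st1.
  by move/negPn/eqP.
rewrite inW; apply/andP; split.
  apply/fsubsetP => j; rewrite inu => /andP [_ fj].
  by apply: (HV s sZ x sx j fj).
apply/asboolP; apply: (Ycl t) => //.
apply/negP => /eqP u0; move: st2; rewrite -sum_eq u0 big_seq_fset0 => /eqP.
by rewrite eq_sym oner_eq0.
Qed.

Lemma nb_cover_comp (R : realType) q (Z W : {fset {fset nat}}) (Y : {fset nat} -> Prop) k
  (f : (nat -> R) -> nat -> R) (g : (nat -> R) -> 'I_q -> R) z :
  coarse_construction k Z Y f -> (forall s, s \in W -> Y s) ->
  (forall x, realis (fun s => s \in Z) x -> realis (fun s => s \in W) (f x)) ->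
  (nb_cover Z (fun x => g (f x)) z <= nb_cover W g z * k)%N.
Proof.
move=> [_ [_ [_ cc]]] WY fW; rewrite /nb_cover.
apply: (@card_cover _ _ _ (fun t => [fset s in Z |
    `[< exists x, in_simplex s x /\ in_simplex t (f x) >] ]%fset)).
  move=> s; rewrite !inE /= => /andP [sZ /asboolP [x [sx gfx]]].
  have [t [tW tfx]] := fW x (ex_intro _ s (conj sZ sx)).
  exists t; first by rewrite !inE /= tW /=; apply/asboolP; exists (f x).
  by rewrite !inE /= sZ /=; apply/asboolP; exists x.
move=> t; rewrite !inE /= => /andP [tW _]; exact: cc _ (WY _ tW).
Qed.

Lemma cont_comp (R : realType) {J : Type} (A B : (nat -> R) -> Prop)
  (f : (nat -> R) -> nat -> R) (g : (nat -> R) -> J -> R) :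
  cont_on A f -> cont_on B g -> (forall x, A x -> B (f x)) ->
  cont_on A (fun x => g (f x)).
Proof.
move=> cf cg AB x Ax e epos.
have [d1 d1pos H1] := cg (f x) (AB x Ax) e epos.
have [d2 d2pos H2] := cf x Ax d1 d1pos.
exists d2 => // y Ay xy j; apply: H1; first exact: AB.
exact: H2.
Qed.

Lemma cont_const (R : realType) {J : Type} (A : (nat -> R) -> Prop) (c : J -> R) :
  cont_on A (fun _ => c).
Proof.
move=> x _ e epos; exists 1 => // y _ _ j; by rewrite subrr normr0.
Qed.

Lemma main_ineq (R : realType) (X Y : {fset nat} -> Prop) (k : nat) :
  bd_complex X -> bd_complex Y ->
  (forall r : nat, con R k X Y r <> None) ->
  forall q : nat, (1 <= q)%N -> forall r : nat,
    (sTOX R q X r <= k * sTOX R q Y (odflt 0%N (con R k X Y r)))%N.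
Proof.
move=> bdX bdY Hcon q _ r.
have [[Yne Ycl] [D HD]] := bdY.
have [Hex [B HB]] : (forall Z, subcomplex Z X -> (nverts Z <= r)%N ->
            exists f, @coarse_construction R k Z Y f) /\
         (exists B, forall n, con_set R k X Y r n -> (n <= B)%N).
  by move: (Hcon r); rewrite /con; case: asboolP.
have mE : odflt 0%N (con R k X Y r) = nat_max (con_set R k X Y r).
  by rewrite /con (asboolT (conj Hex (ex_intro _ B HB))).
rewrite mE; set m := nat_max _.
rewrite {1}/sTOX; set PX := (X in nat_max X).
case: (nat_max_cases PX) => [-> //|[Z [ZX [Zr ->]]]].
have [f0 cf0] := Hex Z ZX Zr.
pose PC := fun n => exists f, @coarse_construction R k Z Y f /\ n = volume Z Y f.
have [[f1 [cc1 e1]] _] := @nat_minP PC (ex_intro _ _ (ex_intro _ f0 (conj cf0 erefl))).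
have Zm : (min_con_vol R k Z Y <= m)%N.
  have [_ Hm] := @nat_maxP (con_set R k X Y r)
     (ex_intro _ _ (ex_intro _ Z (conj ZX (conj Zr erefl)))) (ex_intro _ B HB).
  apply: Hm; by exists Z.
have [fY1 [cf1 _]] := cc1.
have [W0 [W0Y W0im]] := image_finite bdY cf1 fY1.
pose PV := fun n => exists W, subcomplex W Y /\
    (forall x, realis (fun s => s \in Z) x -> realis (fun s => s \in W) (f1 x)) /\
    n = nverts W.
have [[W1 [W1Y [W1im e2]]] _] := @nat_minP PV (ex_intro _ _ (ex_intro _ W0 (conj W0Y (conj W0im erefl)))).
have W1m : (nverts W1 <= m)%N.
  apply: leq_trans Zm; rewrite /min_con_vol -/PC e1 /volume -/PV e2 //.
pose PY := fun n => exists W, subcomplex W Y /\ (nverts W <= m)%N /\ n = sTO R q W.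
have W1le : (sTO R q W1 <= sTOX R q Y m)%N.
  have bnd : exists B, forall n, PY n -> (n <= B)%N.
    exists (m * D)%N => n [W [WY [Wm ->]]].
    apply: leq_trans (sTO_le_card R q W) _.
    apply: leq_trans (card_subcomplex WY HD) _.
    by rewrite leq_mul2r Wm orbT.
  have [_ Hm] := @nat_maxP PY (ex_intro _ _ (ex_intro _ W1 (conj W1Y (conj W1m erefl)))) bnd.
  by apply: Hm; exists W1.
pose PG := fun n => exists g : (nat -> R) -> 'I_q -> R,
    cont_on (realis (fun s => s \in W1)) g /\ n = sOv W1 g.
have [[g [cg e3]] _] := @nat_minP PG
  (ex_intro _ _ (ex_intro _ (fun _ => (fun _ => 0 : R)) (conj (@cont_const R 'I_q _ (fun _ => 0)) erefl))).
pose PZ := fun n => exists h : (nat -> R) -> 'I_q -> R,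
    cont_on (realis (fun s => s \in Z)) h /\ n = sOv Z h.
have hc := cont_comp cf1 cg W1im.
have [_ HZ] := @nat_minP PZ (ex_intro _ _ (ex_intro _ _ (conj hc erefl))).
have Zle : (sTO R q Z <= sOv Z (fun x => g (f1 x)))%N.
  by apply: HZ; exists (fun x => g (f1 x)).
apply: leq_trans Zle _.
apply: (@leq_trans (k * sTO R q W1)); last by rewrite leq_mul2l W1le orbT.
rewrite /sTO -/PG e3.
rewrite {1}/sOv; set PO := (X in nat_max X).
case: (nat_max_cases PO) => [-> //|[z ->]].
apply: leq_trans (nb_cover_comp _ _ cc1 W1Y.2 W1im) _.
rewrite mulnC leq_mul2l; apply/orP; right.
pose PO' := fun n => exists z, n = nb_cover W1 g z.
have bnd : exists B, forall n, PO' n -> (n <= B)%N.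
  exists #|` W1|%N => n [z' ->].
  exact: fsubset_leq_card (fset_sub _ _).
have [_ Hm] := @nat_maxP PO' (ex_intro _ _ (ex_intro _ z erefl)) bnd.
by apply: Hm; exists z.
Qed.

Unset Implicit Arguments.
Local Close Scope classical_set_scope.
Local Close Scope ring_scope.
Local Close Scope fset_scope.

Theorem theorem1p22 (R : realType) (X Y : {fset nat} -> Prop) (k : nat) :
  bd_complex X -> bd_complex Y ->
  (forall r : nat, con R k X Y r <> None) ->
  forall q : nat, (1 <= q)%N -> forall r : nat,
    (sTOX R q X r <= k * sTOX R q Y (odflt 0%N (con R k X Y r)))%N.
Proof.
exact: main_ineq.
Qed.
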